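(* Under the setting below, for any $\epsilon>0$, $$\mathcal{N}_{\mathcal{F}}(\epsilon)\le\mathcal{Z}_{\mathcal{F}}\big(\alpha\epsilon/(8|\mathcal{O}|^{H+1}|\mathcal{A}|^HH|\mathcal{U}_A|^2|\mathcal{U}|)\big).$$
   Context: Process: finite $\mathcal{O},\mathcal{A}$, horizon $H$; histories $\tau_h=(o_1,a_1,\dots,o_h,a_h)$; policies pick $a_h\sim\pi_h(\cdot\mid\tau_{h-1},o_h)$; $\pi(\tau_h)=\prod_{l\le h}\pi_l(a_l\mid\tau_{l-1},o_l)$; $\mathbb{P}^\pi_f(\tau_H)$ is the probability of $\tau_H$ under $\pi$ in model $f$. For a model $f$, a test starting at step $h$ is $t=(o_h,\dots,o_{h+W-1},a_h,\dots,a_{h+W-2})$; $\mathbb{P}_f(t\mid\tau_{h-1})$ is the probability of observing $o_{h:h+W-1}$ when executing $a_{h:h+W-2}$ after $\tau_{h-1}$ ($0$ if unreachable). A set $\mathcal{U}_h$ of tests starting at $h$ is a core test set if for every test $t$ starting at $h$ there is a history-independent $m_{t,h;f}$ with $\mathbb{P}_f(t\mid\tau_{h-1})=\langle m_{t,h;f},q_{\tau_{h-1};f}\rangle$, $q_{\tau_{h-1};f}=[\mathbb{P}_f(u\mid\tau_{h-1})]_{u\in\mathcal{U}_h}$; $q_{0;f}=[\mathbb{P}_f(u)]_{u\in\mathcal{U}_1}$; $M_{o,a,h;f}$ has rows $m_{(o,a,u),h;f}^\top$, $u\in\mathcal{U}_{h+1}$. $\mathcal{U}_{A,h}$: action sequences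 in $\mathcal{U}_h$; $|\mathcal{U}_A|=\max_h|\mathcal{U}_{A,h}|$; $|\mathcal{U}|=\max_h|\mathcal{U}_h|$. $d_{\mathrm{PSR},h;f}$ is the rank of the matrix with entries $\mathbb{P}_f(t\mid\tau_h)$. Core matrix $K_{h;f}$ ($h\ge1$): columns $q_{\tau_h^1;f},\dots,q_{\tau_h^{d_{\mathrm{PSR},h;f}};f}$ for histories whose predictive states span all $q_{\tau_h;f}$, chosen to minimize $\|K_{h;f}^\dagger\|_{1\to1}$; $K_{0;f}=q_{0;f}$. Standing assumptions: the true process $f^*$ is in $\mathcal{F}$; every $f\in\mathcal{F}$ is a valid PSR with core test sets $\{\mathcal{U}_h\}_{h\in[H]}$ and $\|K_{h;f}^\dagger\|_{1\to1}\le1/\alpha$ for $h\in\{0,\dots,H-1\}$; every $o\in\mathcal{O}$ belongs to $\mathcal{U}_H$, and $m_{o,H;f}=e_o$ (standard basis vector indexing $o$ in $\mathcal{U}_H$). Convention: for $f\in\mathcal{F}$ the vectors $m_{(o,a,u),h;f}$ lie in the column space of $K_{h-1;f}$. Bracket number: a size-$N$ $\epsilon$-bracket of $\mathcal{F}$ is $\{(g_1^i,g_2^i)\}_{i=1}^N$ of real functions of (policy, $\tau_H$) with $\sum_{\tau_H}|g_1^i(\pi,\tau_H)-g_2^i(\pi,\tau_H)|\le\epsilon$ for all $\pi,i$, such that each $f\in\mathcal{F}$ has some $i$ with $g_1^i(\pi,\tau_H)\le\mathbb{P}^\pi_f(\tau_H)\le g_2^i(\pi,\tau_H)$ for all $\tau_H,\pi$;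 $\mathcal{N}_{\mathcal{F}}(\epsilon)$ is the minimal $N$. Covering number: $\mathcal{Z}_{\mathcal{F}}(\epsilon)$ is the minimal $n$ such that there is a set $\mathcal{F}'$ of $n$ parameter tuples $\{m'_{(o,a,u),h},q'_0\}$ (not necessarily valid PSRs) such that for every $f\in\mathcal{F}$ some element satisfies $\max_{o,a,h\in[H-1],u\in\mathcal{U}_{h+1}}\|m_{(o,a,u),h;f}-m'_{(o,a,u),h}\|_\infty\le\epsilon$ and $\|q_{0;f}-q'_0\|_\infty\le\epsilon$. *)

(* Defs.v *)
From HB Require Import structures.
From mathcomp Require Import all_boot all_order all_algebra.
Set Implicit Arguments. Unset Strict Implicit. Unset Printing Implicit Defensive.
Import Order.TTheory GRing.Theory Num.Theory.
Local Open Scope ring_scope.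

Section PSR.
Variables (R : realFieldType) (O A : finType).

(* A history tau_h = (o_1,a_1,...,o_h,a_h) is a sequence of (o,a) pairs. *)

(* A (general) sequential process is given by its observation kernels:
   f tau o = probability of observing o at step (size tau).+1 after tau. *)
Definition proc := seq (O * A) -> O -> R.

Definition valid_proc (f : proc) : Prop :=
  (forall tau o, 0 <= f tau o) /\ (forall tau, \sum_(o : O) f tau o = 1).

(* P_f(o_{1:h} | a_{1:h-1}) for tau = tau_h (the last action is irrelevant) *)
Definition prefix_prob (f : proc) (tau : seq (O * A)) : R :=
  \prod_(i < size tau) f (take i tau) (tnth (in_tuple tau) i).1.

(* A test starting at h: (o_h, [(a_h,o_{h+1}); ...; (a_{h+W-2},o_{h+W-1})]). *)
Definition test := (O * seq (A * O))%type.

Definition valid_test (H h : nat) (t : test) : bool := (h + size t.2 <= H)%N.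

Fixpoint test_prob_raw (f : proc) (tau : seq (O * A)) (o : O)
    (r : seq (A * O)) : R :=
  match r with
  | [::] => f tau o
  | (a, o') :: r' => f tau o * test_prob_raw f (rcons tau (o, a)) o' r'
  end.

(* P_f(t | tau_{h-1}), 0 if tau_{h-1} is unreachable *)
Definition test_prob (f : proc) (t : test) (tau : seq (O * A)) : R :=
  if prefix_prob f tau == 0 then 0 else test_prob_raw f tau t.1 t.2.

(* Policies: pi tau_{h-1} o_h a_h = pi_h(a_h | tau_{h-1}, o_h). *)
Definition policy := seq (O * A) -> O -> A -> R.

Definition valid_policy (pi : policy) : Prop :=
  (forall tau o a, 0 <= pi tau o a) /\ (forall tau o, \sum_(a : A) pi tau o a = 1).

Definition policy_prob (pi : policy) (tau : seq (O * A)) : R :=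
  \prod_(i < size tau)
     pi (take i tau) (tnth (in_tuple tau) i).1 (tnth (in_tuple tau) i).2.

Definition traj_prob (f : proc) (pi : policy) (tau : seq (O * A)) : R :=
  policy_prob pi tau * prefix_prob f tau.

Definition represents (f : proc) (U : nat -> seq test) (h : nat) (t : test)
    (m : test -> R) : Prop :=
  forall tau : (h.-1).-tuple (O * A),
    test_prob f t tau = \sum_(u <- U h) m u * test_prob f u tau.

(* m lies in the span of the predictive states q_{tau_{h-1}}
   (= the column space of the core matrix K_{h-1}) *)
Definition in_qspan (f : proc) (U : nat -> seq test) (h : nat)
    (m : test -> R) : Prop :=
  exists c : (h.-1).-tuple (O * A) -> R,
    forall u, u \in U h -> m u = \sum_tau c tau * test_prob f u tau.

(* m = m_{t,h;f} (with the column-space convention, which makes it unique) *)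
Definition psr_m (f : proc) (U : nat -> seq test) (h : nat) (t : test)
    (m : test -> R) : Prop :=
  represents f U h t m /\ in_qspan f U h m.

Definition core_test_set (H : nat) (f : proc) (U : nat -> seq test) (h : nat)
    : Prop :=
  uniq (U h) /\ (forall u, u \in U h -> valid_test H h u) /\
  (forall t, valid_test H h t -> exists m, represents f U h t m).

Definition indep_hists (H : nat) (f : proc) (h k : nat)
    (taus : 'I_k -> h.-tuple (O * A)) : Prop :=
  forall c : 'I_k -> R,
    (forall t, valid_test H h.+1 t ->
       \sum_(i < k) c i * test_prob f t (taus i) = 0) ->
    forall i, c i = 0.

(* d = d_{PSR,h;f}: rank of the matrix (P_f(t | tau_h))_{t, tau_h} *)
Definition psr_rank (H : nat) (f : proc) (h d : nat) : Prop :=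
  (exists taus : 'I_d -> h.-tuple (O * A), @indep_hists H f h d taus) /\
  (forall taus : 'I_d.+1 -> h.-tuple (O * A), ~ @indep_hists H f h d.+1 taus).

Definition penrose m n (K : 'M[R]_(m, n)) (X : 'M[R]_(n, m)) : Prop :=
  [/\ K *m X *m K = K, X *m K *m X = X,
      (K *m X)^T = K *m X & (X *m K)^T = X *m K].

(* induced l1 -> l1 operator norm = maximal absolute column sum *)
Definition norm11 m n (X : 'M[R]_(m, n)) : R :=
  \big[Num.max/0]_(j < n) \sum_(i < m) `|X i j|.

Definition qcols (f : proc) (U : nat -> seq test) (h d : nat)
    (taus : 'I_d -> seq (O * A)) : 'M[R]_(size (U h), d) :=
  \matrix_(i < size (U h), j < d) test_prob f (tnth (in_tuple (U h)) i) (taus j).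

(* ||K_{0;f}^dagger||_{1->1} <= b, with K_{0;f} = q_{0;f} *)
Definition K0_bound (f : proc) (U : nat -> seq test) (b : R) : Prop :=
  exists X, penrose (qcols f U 1 (fun _ : 'I_1 => [::])) X /\ norm11 X <= b.

(* ||K_{h;f}^dagger||_{1->1} <= b for h >= 1, where K_{h;f} is a minimizing
   choice of d_{PSR,h;f} histories whose predictive states span all q_{tau_h} *)
Definition Kh_bound (H : nat) (f : proc) (U : nat -> seq test) (h : nat)
    (b : R) : Prop :=
  exists d, psr_rank H f h d /\
  exists taus : 'I_d -> h.-tuple (O * A),
    (forall tau : h.-tuple (O * A), exists c : 'I_d -> R,
       forall u, u \in U h.+1 ->
         test_prob f u tau = \sum_(j < d) c j * test_prob f u (taus j)) /\
    exists X, penrose (qcols f U h.+1 (fun j => tval (taus j))) X /\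
              norm11 X <= b.

Definition psr_model (H : nat) (U : nat -> seq test) (alpha : R) (f : proc)
    : Prop :=
  [/\ valid_proc f,
      (forall h, (1 <= h <= H)%N -> core_test_set H f U h),
      (forall o : O, (o, [::]) \in U H),
      K0_bound f U (1 / alpha) &
      (forall h, (1 <= h <= H.-1)%N -> Kh_bound H f U h (1 / alpha))].

Definition is_bracket (H : nat) (F : proc -> Prop) (eps : R) (N : nat)
    (g1 g2 : 'I_N -> policy -> H.-tuple (O * A) -> R) : Prop :=
  (forall i pi, valid_policy pi ->
     \sum_(tau : H.-tuple (O * A)) `|g1 i pi tau - g2 i pi tau| <= eps) /\
  (forall f, F f -> exists i, forall pi, valid_policy pi ->
     forall tau : H.-tuple (O * A),
       g1 i pi tau <= traj_prob f pi tau <= g2 i pi tau).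

(* there is an eps-bracket of size N, i.e. N_F(eps) <= N *)
Definition has_bracket (H : nat) (F : proc -> Prop) (eps : R) (N : nat) : Prop :=
  exists g1 g2, @is_bracket H F eps N g1 g2.

(* m' i o a u h = m'_{(o,a,u),h} in R^{U_h}, q' i = q'_0 in R^{U_1} *)
Definition is_cover (H : nat) (U : nat -> seq test) (F : proc -> Prop)
    (eps : R) (n : nat)
    (m' : 'I_n -> O -> A -> test -> nat -> test -> R) (q' : 'I_n -> test -> R)
    : Prop :=
  forall f, F f -> exists i,
    (forall o a h u, (1 <= h <= H.-1)%N -> u \in U h.+1 ->
       exists m, psr_m f U h (o, (a, u.1) :: u.2) m /\
         forall v, v \in U h -> `|m v - m' i o a u h v| <= eps) /\
    (forall u, u \in U 1%N -> `|test_prob f u [::] - q' i u| <= eps).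

(* there is an eps-cover of size n, i.e. Z_F(eps) <= n *)
Definition has_cover (H : nat) (U : nat -> seq test) (F : proc -> Prop)
    (eps : R) (n : nat) : Prop :=
  exists m' q', @is_cover H U F eps n m' q'.

Definition UA_size (H : nat) (U : nat -> seq test) : nat :=
  \max_(h < H) size (undup [seq map fst u.2 | u <- U h.+1]).
Definition U_size (H : nat) (U : nat -> seq test) : nat :=
  \max_(h < H) size (U h.+1).

End PSR.

(* Main.v *)
Require Import Defs.
From HB Require Import structures.
From mathcomp Require Import all_boot all_order all_algebra.
From Stdlib Require Import ClassicalEpsilon Classical.
From mathcomp Require Import zify ring lra.
Set Implicit Arguments. Unset Strict Implicit. Unset Printing Implicit Defensive.
Import Order.TTheory GRing.Theory Num.Theory.
Local Open Scope ring_scope.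

Lemma skolem (X Y : Type) (P : X -> Y -> Prop) :
  (forall x, exists y, P x y) -> exists g : X -> Y, forall x, P x (g x).
Proof.
move=> h; exists (fun x => proj1_sig (constructive_indefinite_description _ (h x))).
move=> x; exact: (proj2_sig (constructive_indefinite_description _ (h x))).
Qed.

Lemma seq_tuple (T : Type) k (s : seq T) : size s = k -> exists t : k.-tuple T, tval t = s.
Proof. move=> Hs; have Hs' : size s == k by apply/eqP. by exists (Tuple Hs'). Qed.

Section Basics.
Variables (R : realFieldType) (O A : finType).
Implicit Types (f : proc R O A) (s : seq (O * A)).

Lemma f_le1 f : valid_proc f -> forall s o, 0 <= f s o <= 1.
Proof.
case=> H0 H1 s o; rewrite H0 /= -(H1 s) (bigD1 o) //= lerDl.
by apply: sumr_ge0 => i _; apply: H0.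
Qed.

Lemma prefix_probE f s x0 :
  prefix_prob f s = \prod_(i < size s) f (take i s) (nth x0 s i).1.
Proof. by apply: eq_bigr => i _; rewrite (tnth_nth x0). Qed.

Lemma prefix_rcons f s x : prefix_prob f (rcons s x) = prefix_prob f s * f s x.1.
Proof.
rewrite (prefix_probE _ _ x) (prefix_probE _ s x).
rewrite -(big_mkord xpredT (fun i => f (take i (rcons s x)) (nth x (rcons s x) i).1)).
rewrite -(big_mkord xpredT (fun i => f (take i s) (nth x s i).1)).
rewrite size_rcons big_nat_recr //=; congr (_ * _).
  rewrite big_seq_cond [RHS]big_seq_cond; apply: eq_bigr => i.
  rewrite mem_iota add0n subn0 andbT => /andP[_ Hi].
  by rewrite -cats1 take_cat Hi nth_cat Hi.
by rewrite -cats1 take_size_cat // nth_cat ltnn subnn.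
Qed.

Lemma prefix_nil f : prefix_prob f [::] = 1.
Proof. by rewrite /prefix_prob big_ord0. Qed.

Lemma prefix_bounds f : valid_proc f -> forall s, 0 <= prefix_prob f s <= 1.
Proof.
move=> Hf s; apply/andP; split.
  by apply: prodr_ge0 => i _; case/andP: (f_le1 Hf (take i s) (tnth (in_tuple s) i).1).
by apply: prodr_ile1 => i _; apply: f_le1.
Qed.

Lemma raw_bounds f : valid_proc f -> forall r s o, 0 <= test_prob_raw f s o r <= 1.
Proof.
move=> Hf; elim=> [|[a o'] r IH] s o /=; first exact: f_le1.
case/andP: (f_le1 Hf s o) => h0 h1; case/andP: (IH (rcons s (o, a)) o') => g0 g1.
by rewrite mulr_ge0 //= mulr_ile1.
Qed.

Lemma tp_bounds f : valid_proc f -> forall t s, 0 <= test_prob f t s <= 1.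
Proof.
move=> Hf t s; rewrite /test_prob; case: eqP => _; first by rewrite lexx ler01.
exact: raw_bounds.
Qed.

Lemma tp_le_raw f : valid_proc f -> forall t s, test_prob f t s <= test_prob_raw f s t.1 t.2.
Proof.
move=> Hf t s; rewrite /test_prob; case: eqP => _ //.
by case/andP: (raw_bounds Hf t.2 s t.1).
Qed.

Lemma tp_cons f s o a (u : test O A) :
  test_prob f (o, (a, u.1) :: u.2) s = f s o * test_prob f u (rcons s (o, a)).
Proof.
rewrite /test_prob /= prefix_rcons /=.
have [->|p0] := eqP; first by rewrite mul0r eqxx mulr0.
have [->|f0] := eqVneq (f s o) 0; first by rewrite !mul0r.
by rewrite mulf_eq0 (negPf f0) orbF; move/eqP/negPf: p0 => ->.
Qed.

Definition W f s (u : test O A) := prefix_prob f s * test_prob f u s.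

Lemma W_step f s o a (u : test O A) :
  prefix_prob f s * test_prob f (o, (a, u.1) :: u.2) s = W f (rcons s (o, a)) u.
Proof. by rewrite tp_cons /W prefix_rcons mulrA. Qed.

Lemma W_nil f u : W f [::] u = test_prob f u [::].
Proof. by rewrite /W prefix_nil mul1r. Qed.

Lemma W_last f s (x : O * A) : prefix_prob f (rcons s x) = W f s (x.1, [::]).
Proof.
rewrite prefix_rcons /W /test_prob /=.
by have [->|] := eqP; rewrite ?mul0r.
Qed.

Lemma W_bounds f : valid_proc f -> forall s u, 0 <= W f s u <= test_prob_raw f s u.1 u.2.
Proof.
move=> Hf s u; rewrite /W; case/andP: (prefix_bounds Hf s) => p0 p1.
case/andP: (tp_bounds Hf u s) => t0 t1.
rewrite mulr_ge0 //=; apply: le_trans (tp_le_raw Hf u s).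
by rewrite ler_piMl.
Qed.

End Basics.
Section Group.
Variables (R : realFieldType) (O A : finType).

Fixpoint allobs (s : seq A) : seq (test O A) :=
  match s with
  | [::] => [seq (o, [::]) | o <- index_enum O]
  | a :: s' => [seq (o, (a, t.1) :: t.2) | o <- index_enum O, t <- allobs s']
  end.

Lemma mem_allobs (t : test O A) : t \in allobs (map fst t.2).
Proof.
case: t => o r; elim: r o => [|[a o'] r IH] o /=.
  by apply: (map_f (fun o => (o, [::]))); exact: mem_index_enum.
exact: (allpairs_f (fun o (t : test O A) => (o, (a, t.1) :: t.2)) (mem_index_enum o) (IH o')).
Qed.

Lemma sum_allobs (f : proc R O A) : valid_proc f ->
  forall s tau, \sum_(t <- allobs s) test_prob_raw f tau t.1 t.2 = 1.
Proof.
move=> Hf; elim=> [|a s IH] tau /=.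
  by rewrite big_map; exact: (proj2 Hf tau).
rewrite big_allpairs_dep /=; rewrite -[RHS](proj2 Hf tau); apply: eq_bigr => o _.
by rewrite -mulr_sumr IH mulr1.
Qed.

Lemma sum_subseq_le (T : eqType) (l1 l2 : seq T) (p : T -> R) :
  uniq l1 -> {subset l1 <= l2} -> (forall x, 0 <= p x) ->
  \sum_(x <- l1) p x <= \sum_(x <- l2) p x.
Proof.
elim: l1 l2 => [|x l1 IH] l2 /= Hu Hs Hp.
  by rewrite big_nil; apply: sumr_ge0.
case/andP: Hu => xn Hu; have xl2 : x \in l2 by apply: Hs; rewrite inE eqxx.
rewrite [X in _ <= X](perm_big _ (perm_to_rem xl2)) !big_cons lerD2l.
apply: IH => // y yl1; apply: rem_mem.
  by apply: contraNneq xn => <-.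
by apply: Hs; rewrite inE yl1 orbT.
Qed.

Lemma sum_const1 (T : Type) (L : seq T) : \sum_(x <- L) (1 : R) = (size L)%:R.
Proof. by elim: L => [|x L IH]; rewrite ?big_nil // big_cons IH /= -add1n natrD. Qed.

Lemma sum_tests_le (f : proc R O A) (Hf : valid_proc f) (l : seq (test O A)) tau :
  uniq l ->
  \sum_(v <- l) test_prob f v tau <= (size (undup [seq map fst u.2 | u <- l]))%:R.
Proof.
move=> Hu; set L := undup _.
apply: (@le_trans _ _ (\sum_(v <- l) test_prob_raw f tau v.1 v.2)).
  by apply: ler_sum => v _; apply: tp_le_raw.
have -> : \sum_(v <- l) test_prob_raw f tau v.1 v.2 =
   \sum_(v <- l) \sum_(s <- L) ((map fst v.2 == s)%:R * test_prob_raw f tau v.1 v.2).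
  apply: eq_big_seq => v vl; rewrite -mulr_suml.
  suff -> : \sum_(s <- L) ((map fst v.2 == s)%:R : R) = 1 by rewrite mul1r.
  rewrite -natr_sum; apply/eqP; rewrite pnatr_eq1; apply/eqP.
  have vL : map fst v.2 \in L by rewrite mem_undup (map_f (fun u : test O A => map fst u.2) vl).
  have := count_uniq_mem (map fst v.2) (undup_uniq [seq map fst u.2 | u <- l]).
  rewrite -/L vL /= => <-; rewrite -sum1_count [RHS]big_mkcond /=.
  by apply: eq_bigr => s _; rewrite eq_sym; case: eqP.
rewrite exchange_big /= -sum_const1; apply: ler_sum => s _.
rewrite -[X in _ <= X](sum_allobs Hf s tau).
have -> : \sum_(v <- l) ((map fst v.2 == s)%:R * test_prob_raw f tau v.1 v.2) =
   \sum_(v <- [seq v <- l | map fst v.2 == s]) test_prob_raw f tau v.1 v.2.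
  rewrite big_filter [RHS]big_mkcond /=; apply: eq_bigr => v _.
  by case: eqP; rewrite ?mul1r ?mul0r.
apply: sum_subseq_le; first exact: filter_uniq.
  move=> v; rewrite mem_filter => /andP[/eqP <- _]; exact: mem_allobs.
by move=> v; case/andP: (raw_bounds Hf v.2 tau v.1).
Qed.

End Group.
Section PI.
Variables (R : realFieldType) (O A : finType).

Lemma norm11_ge m n (X : 'M[R]_(m, n)) j : \sum_(i < m) `|X i j| <= norm11 X.
Proof. rewrite /norm11; exact: (le_bigmax _ (fun j => \sum_(i < m) `|X i j|) j). Qed.

Lemma pi_bound n d (K : 'M[R]_(n, d)) (X : 'M[R]_(d, n)) (b : R)
    (l : 'I_n -> R) (w : 'I_d -> R) :
  penrose K X -> norm11 X <= b ->
  (forall i, l i = \sum_j w j * K i j) ->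
  (forall j, `|\sum_i l i * K i j| <= 1) ->
  forall x : 'I_n -> R, `|\sum_i l i * x i| <= b * \sum_i `|x i|.
Proof.
case=> KXK _ KXt _ Hb Hl HlK x.
pose lv := \col_i l i; pose xv := \col_i x i; pose wv := \col_j w j.
have Elv : lv = K *m wv.
  apply/matrixP => i j; rewrite (ord1 j) !mxE Hl; apply: eq_bigr => k _.
  by rewrite !mxE mulrC.
have Plv : (K *m X) *m lv = lv by rewrite Elv mulmxA KXK.
have E1 : \sum_i l i * x i = (lv^T *m xv) 0 0.
  by rewrite !mxE; apply: eq_bigr => i _; rewrite !mxE.
have E2 : lv^T *m xv = (lv^T *m K) *m (X *m xv).
  by rewrite -{1}Plv trmx_mul KXt !mulmxA.
rewrite E1 E2 mxE; apply: le_trans (ler_norm_sum _ _ _) _.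
apply: (@le_trans _ _ (\sum_j `|(X *m xv) j 0|)).
  apply: ler_sum => j _; rewrite normrM ler_piMl //.
  have -> : (lv^T *m K) 0 j = \sum_i l i * K i j.
    by rewrite mxE; apply: eq_bigr => i _; rewrite !mxE.
  exact: HlK.
apply: (@le_trans _ _ (\sum_j \sum_i `|X j i| * `|x i|)).
  apply: ler_sum => j _; rewrite mxE; apply: le_trans (ler_norm_sum _ _ _) _.
  by apply: ler_sum => i _; rewrite !mxE normrM.
rewrite exchange_big /= mulr_sumr; apply: ler_sum => i _.
rewrite -mulr_suml mulrC [X in _ <= X]mulrC; apply: (ler_wpM2l (normr_ge0 _)).
exact: le_trans (norm11_ge X i) Hb.
Qed.

Lemma qcolsE (f : proc R O A) U h d (taus : 'I_d -> seq (O * A)) i j :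
  qcols f U h taus i j = test_prob f (tnth (in_tuple (U h)) i) (taus j).
Proof. exact: mxE. Qed.

Definition Kgood (f : proc R O A) (U : nat -> seq (test O A)) (h : nat) (b : R) : Prop :=
  exists d (taus : 'I_d -> (h.-1).-tuple (O * A)),
    (forall sig : (h.-1).-tuple (O * A), exists c : 'I_d -> R,
       forall u, u \in U h -> test_prob f u sig = \sum_(j < d) c j * test_prob f u (taus j)) /\
    exists X, penrose (qcols f U h (fun j => tval (taus j))) X /\ norm11 X <= b.

Definition good (f : proc R O A) (U : nat -> seq (test O A)) (k : nat) (l : test O A -> R) :=
  in_qspan f U k.+1 l /\
  forall sig : k.-tuple (O * A), `|\sum_(u <- U k.+1) l u * test_prob f u sig| <= 1.

Lemma good_bound f U k b l : Kgood f U k.+1 b -> good f U k l ->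
  forall x : test O A -> R,
  `|\sum_(u <- U k.+1) l u * x u| <= b * \sum_(u <- U k.+1) `|x u|.
Proof.
case=> d [taus [Hspan [X [HP Hb]]]] [[c Hc] Hl] x.
have [c' Hc'] := skolem Hspan.
rewrite !(big_tnth _ _ (U k.+1)).
apply: (pi_bound (w := fun j => \sum_sig c sig * c' sig j) HP Hb).
- move=> i; have Hi : tnth (in_tuple (U k.+1)) i \in U k.+1.
    exact: (mem_tnth i (in_tuple (U k.+1))).
  rewrite (Hc _ Hi).
  under eq_bigr => sig _ do rewrite (Hc' sig _ Hi) mulr_sumr.
  rewrite exchange_big /=; apply: eq_bigr => j _; rewrite mulr_suml.
  by apply: eq_bigr => sig _; rewrite mulrA; congr (_ * _); symmetry; apply: qcolsE.
- move=> j; have := Hl (taus j); rewrite (big_tnth _ _ (U k.+1)).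
  move=> H1; apply: le_trans H1; rewrite le_eqVlt; apply/orP; left; apply/eqP.
  by congr (`| _ |); apply: eq_bigr => i _; congr (_ * _); apply: qcolsE.
Qed.

End PI.
Section Aux.
Variables (R : realFieldType) (O A : finType).
Implicit Types (f : proc R O A) (U : nat -> seq (test O A)).

Lemma K0_Kgood f U b : K0_bound f U b -> Kgood f U 1 b.
Proof.
case=> X [HP Hb]; exists 1%N, (fun _ => [tuple]); split.
  move=> sig; exists (fun _ => 1) => u _; rewrite big_ord1 mul1r (tuple0 sig) //.
by exists X.
Qed.

Lemma Kh_Kgood H f U h b : Kh_bound H f U h b -> Kgood f U h.+1 b.
Proof. by case=> d [_ [taus [Hs [X HX]]]]; exists d, taus; split => //; exists X. Qed.

Lemma US_ge H U h : (h < H)%N -> (size (U h.+1) <= U_size H U)%N.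
Proof. by move=> hH; rewrite /U_size; exact: (leq_bigmax (Ordinal hH)). Qed.

Lemma UA_ge H U h : (h < H)%N ->
  (size (undup [seq map fst u.2 | u <- U h.+1]) <= UA_size H U)%N.
Proof.
by move=> hH; rewrite /UA_size; exact: (leq_bigmax (Ordinal hH)).
Qed.

Lemma UA_ge1 H U (o : O) : (0 < H)%N -> (o, [::]) \in U H -> (1 <= UA_size H U)%N.
Proof.
move=> H0 oU; have hH : (H.-1 < H)%N by rewrite prednK.
apply: leq_trans (UA_ge U hH); rewrite prednK //.
have : [::] \in undup [seq map fst u.2 | u <- U H].
  by rewrite mem_undup; apply: (map_f (fun u : test O A => map fst u.2) oU).
by case: (undup _).
Qed.

Lemma exists_o f : valid_proc f -> forall s, exists o : O, f s o != 0.
Proof.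
case=> _ H1 s; apply: NNPP => Hn.
have : \sum_o f s o = 0.
  apply: big1 => o _; apply/eqP; apply: negbNE; apply/negP => h; apply: Hn; by exists o.
by rewrite H1 => /eqP; rewrite oner_eq0.
Qed.

Lemma alpha_le H f U alpha : 0 < alpha -> valid_proc f -> core_test_set H f U 1 ->
  (1 <= H)%N -> K0_bound f U (1 / alpha) -> alpha <= (size (U 1))%:R.
Proof.
move=> Ha Hf [_ [_ Hrep]] H1 [X [[KXK _ _ _] Hb]].
set K := qcols f U 1 (fun _ : 'I_1 => [::]) in KXK.
have [i0 Hi0] : exists i0, K i0 0 != 0.
  apply: NNPP => Hn.
  have [o Ho] := exists_o Hf [::].
  have [m Hm] := Hrep (o, [::]) H1.
  have E1 : test_prob f (o, [::]) [::] = f [::] o.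
    by rewrite /test_prob /= prefix_nil oner_eq0.
  have := Hm [tuple]; rewrite /= E1.
  rewrite (big_tnth _ _ (U 1)) big1 => [E|i _].
    by move: Ho; rewrite E eqxx.
  have : K i 0 = 0.
    apply/eqP; apply: negbNE; apply/negP => h; apply: Hn; by exists i.
  by rewrite /K qcolsE => ->; rewrite mulr0.
have XK1 : (X *m K) 0 0 = 1.
  have := congr1 (fun M : 'M[R]_(size (U 1), 1) => M i0 0) KXK; rewrite /= -mulmxA mxE big_ord1 => E.
  by apply: (mulfI Hi0); rewrite mulr1.
have : 1 <= (size (U 1))%:R * (1 / alpha).
  rewrite -[X in X <= _]XK1 mxE; apply: le_trans (ler_norm _) _.
  apply: le_trans (ler_norm_sum _ _ _) _.
  apply: (@le_trans _ _ (\sum_(j < size (U 1)) (1 / alpha))).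
    apply: ler_sum => j _; rewrite normrM.
    apply: (@le_trans _ _ `|X 0 j|).
      rewrite ler_piMr //; rewrite /K qcolsE.
      by case/andP: (tp_bounds Hf (tnth (in_tuple (U 1)) j) [::]) => a b; rewrite ger0_norm.
    apply: le_trans Hb; have := norm11_ge X j; by rewrite big_ord1.
  by rewrite sumr_const card_ord mulr_natl.
by rewrite mul1r ler_pdivlMr // mul1r.
Qed.

End Aux.
Section Pert.
Variables (R : realFieldType) (O A : finType).
Variables (H : nat) (U : nat -> seq (test O A)) (alpha : R) (f g : proc R O A).
Variables (mf mg : O -> A -> nat -> test O A -> test O A -> R) (e : R).
Hypothesis HH : (0 < H)%N.
Hypothesis Ha : 0 < alpha.
Hypothesis Hf : psr_model H U alpha f.
Hypothesis Hg : valid_proc g.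
Hypothesis He : 0 <= e.
Hypothesis Hmf : forall o a h u, (1 <= h <= H.-1)%N -> u \in U h.+1 ->
  psr_m f U h (o, (a, u.1) :: u.2) (mf o a h u).
Hypothesis Hmg : forall o a h u, (1 <= h <= H.-1)%N -> u \in U h.+1 ->
  psr_m g U h (o, (a, u.1) :: u.2) (mg o a h u).
Hypothesis Hclose : forall o a h u v, (1 <= h <= H.-1)%N -> u \in U h.+1 -> v \in U h ->
  `|mf o a h u v - mg o a h u v| <= e.
Hypothesis Hq : forall u, u \in U 1 -> `|test_prob f u [::] - test_prob g u [::]| <= e.

Let UA : R := (UA_size H U)%:R.
Let US : R := (U_size H U)%:R.
Let c : R := e * UA * US / alpha.

Let Hfv : valid_proc f. Proof. by case: Hf. Qed.

Lemma Wtrans (p : proc R O A) h (sig : seq (O * A)) o a u m :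
  (1 <= h)%N -> size sig = h.-1 -> represents p U h (o, (a, u.1) :: u.2) m ->
  W p (rcons sig (o, a)) u = \sum_(v <- U h) m v * W p sig v.
Proof.
move=> h1 Hs Hr; rewrite -W_step.
have [t Ht] := seq_tuple Hs.
rewrite -Ht (Hr t) mulr_sumr; apply: eq_bigr => v _; rewrite /W.
by rewrite mulrCA.
Qed.

Lemma uniqU h : (1 <= h <= H)%N -> uniq (U h).
Proof. by move=> hH; case: Hf => _ Hc _ _ _; case: (Hc h hH). Qed.

Lemma sumWg h sig : (1 <= h <= H)%N -> \sum_(v <- U h) W g sig v <= UA.
Proof.
case/andP=> h1 hH.
apply: (@le_trans _ _ (\sum_(v <- U h) test_prob g v sig)).
  apply: ler_sum => v _; rewrite /W; case/andP: (prefix_bounds Hg sig) => p0 p1.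
  case/andP: (tp_bounds Hg v sig) => t0 t1; by rewrite ler_piMl.
apply: le_trans (sum_tests_le Hg sig (uniqU (h:=h) _)) _; first by rewrite h1.
rewrite /UA ler_nat; have := @UA_ge O A H U h.-1; rewrite prednK //; apply.
lia.
Qed.

Lemma UA_ge1' : 1 <= UA.
Proof.
case: Hf => Hv _ HoU _ _; have [o _] := exists_o Hv [::].
by rewrite /UA ler1n; apply: (UA_ge1 HH (HoU o)).
Qed.

Lemma alpha_US : alpha <= US.
Proof.
case: Hf => Hv Hc _ HK0 _.
apply: le_trans (alpha_le Ha Hv (Hc 1%N _) HH HK0) _; first lia.
by rewrite /US ler_nat; apply: US_ge.
Qed.

Lemma e_le_c : e <= c.
Proof.
have h1 : 1 <= US / alpha by rewrite ler_pdivlMr // mul1r alpha_US.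
have -> : c = e * (UA * (US / alpha)) by rewrite /c !mulrA.
rewrite -[X in X <= _]mulr1; apply: (ler_wpM2l He).
by rewrite -[X in X <= _](mulr1 1); apply: ler_pM => //; apply: UA_ge1'.
Qed.


Lemma eUA_le_c : e * UA <= c.
Proof.
have h1 : 1 <= US / alpha by rewrite ler_pdivlMr // mul1r alpha_US.
have -> : c = e * UA * (US / alpha) by rewrite /c !mulrA.
rewrite -[X in X <= _]mulr1; apply: ler_wpM2l => //.
by rewrite mulr_ge0 //; apply: le_trans UA_ge1'.
Qed.

Lemma Kgood_lvl k : (k <= H.-1)%N -> Kgood f U k.+1 (1 / alpha).
Proof.
case: Hf => _ _ _ HK0 HKh; case: k => [|k] hk; first exact: K0_Kgood.
by apply: (Kh_Kgood (H := H)); apply: HKh; rewrite hk.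
Qed.

Lemma qspan_comb (p : proc R O A) h (l : seq (test O A)) (w : test O A -> R)
    (m : test O A -> test O A -> R) :
  (forall u, u \in l -> in_qspan p U h (m u)) ->
  in_qspan p U h (fun v => \sum_(u <- l) w u * m u v).
Proof.
elim: l => [|x l IH] Hm.
  exists (fun _ => 0) => u _; rewrite big_nil; symmetry; apply: big1 => t _.
  by rewrite mul0r.
have [c0 H0] := Hm x (mem_head x l).
have [c1 H1] : in_qspan p U h (fun v => \sum_(u <- l) w u * m u v).
  by apply: IH => u hu; apply: Hm; rewrite inE hu orbT.
exists (fun t => w x * c0 t + c1 t) => u hu.
rewrite big_cons H0 // H1 // mulr_sumr -big_split; apply: eq_bigr => t _ /=.
by rewrite mulrDl mulrA.
Qed.

Lemma decomp k sig o a u : (k.+1 <= H.-1)%N -> size sig = k -> u \in U k.+2 ->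
  W f (rcons sig (o, a)) u - W g (rcons sig (o, a)) u =
  \sum_(v <- U k.+1) mf o a k.+1 u v * (W f sig v - W g sig v) +
  \sum_(v <- U k.+1) (mf o a k.+1 u v - mg o a k.+1 u v) * W g sig v.
Proof.
move=> hk hs hu.
have hk' : (1 <= k.+1 <= H.-1)%N by rewrite hk.
rewrite (Wtrans (h := k.+1) _ _ (proj1 (Hmf o a hk' hu))) //.
rewrite (Wtrans (h := k.+1) _ _ (proj1 (Hmg o a hk' hu))) //.
rewrite -big_split -sumrB; apply: eq_bigr => v _ /=; ring.
Qed.

Lemma Dbound k sig o a u : (k.+1 <= H.-1)%N -> u \in U k.+2 ->
  `|\sum_(v <- U k.+1) (mf o a k.+1 u v - mg o a k.+1 u v) * W g sig v| <= e * UA.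
Proof.
move=> hk hu; have hk' : (1 <= k.+1 <= H.-1)%N by rewrite hk.
apply: le_trans (ler_norm_sum _ _ _) _.
apply: (@le_trans _ _ (\sum_(v <- U k.+1) e * W g sig v)).
  rewrite big_seq_cond [X in _ <= X]big_seq_cond; apply: ler_sum => v /andP[hv _].
  case/andP: (W_bounds Hg sig v) => w0 _.
  by rewrite normrM (ger0_norm w0); apply: ler_wpM2r => //; apply: Hclose.
rewrite -mulr_sumr; apply: ler_wpM2l => //; apply: sumWg.
by move: hk; case: (H) => // n /=; lia.
Qed.

Lemma good_m k o a u : (k.+1 <= H.-1)%N -> u \in U k.+2 ->
  good f U k (mf o a k.+1 u).
Proof.
move=> hk hu; have hk' : (1 <= k.+1 <= H.-1)%N by rewrite hk.
have [Hr Hs] := Hmf o a hk' hu; split => // sig.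
have := Hr sig; rewrite /= => <-.
by case/andP: (tp_bounds Hfv (o, (a, u.1) :: u.2) sig) => t0 t1; rewrite ger0_norm.
Qed.

Lemma good_comb k o a l : (k.+1 <= H.-1)%N -> good f U k.+1 l ->
  good f U k (fun v => \sum_(u <- U k.+2) l u * mf o a k.+1 u v).
Proof.
move=> hk [_ Hl]; have hk' : (1 <= k.+1 <= H.-1)%N by rewrite hk.
split.
  by apply: qspan_comb => u hu; exact: (proj2 (Hmf o a hk' hu)).
move=> sig.
have -> : \sum_(v <- U k.+1) (\sum_(u <- U k.+2) l u * mf o a k.+1 u v) * test_prob f v sig =
          f sig o * \sum_(u <- U k.+2) l u * test_prob f u (rcons sig (o, a)).
  under eq_bigr => v _ do rewrite mulr_suml.
  rewrite exchange_big /= mulr_sumr big_seq_cond [RHS]big_seq_cond.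
  apply: eq_bigr => u /andP[hu _].
  under eq_bigr => v _ do rewrite -mulrA.
  rewrite -mulr_sumr -(proj1 (Hmf o a hk' hu) sig) /= tp_cons.
  by rewrite mulrCA.
have [t Ht] : exists t : k.+1.-tuple (O * A), tval t = rcons sig (o, a).
  by apply: seq_tuple; rewrite size_rcons size_tuple.
rewrite -Ht normrM; case/andP: (f_le1 Hfv sig o) => f0 f1.
by rewrite (ger0_norm f0) -[X in _ <= X]mulr1; apply: ler_pM => //; apply: Hl.
Qed.

Lemma claim s (x0 : O * A) : size s = H.-1 -> forall k, (k <= size s)%N ->
  forall l, good f U k l ->
  `|\sum_(u <- U k.+1) l u * (W f (take k s) u - W g (take k s) u)| <= k.+1%:R * c.
Proof.
move=> Hs; elim=> [|k IH] hk l Hl.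
  rewrite take0; under eq_bigr => u _ do rewrite !W_nil.
  apply: le_trans (good_bound (Kgood_lvl (k := 0) _) Hl _) _; first by [].
  apply: (@le_trans _ _ (1 / alpha * (e * (size (U 1))%:R))).
    apply: ler_wpM2l; first by rewrite divr_ge0 // ltW.
    rewrite -sum_const1 mulr_sumr mulr1 big_seq_cond [X in _ <= X]big_seq_cond.
    by apply: ler_sum => u /andP[hu _]; apply: Hq.
  rewrite mul1r /c mulrC mul1r ler_wpM2r //; first by rewrite invr_ge0 ltW.
  rewrite -mulrA ler_wpM2l //.
  apply: (@le_trans _ _ US); first by rewrite /US ler_nat; apply: US_ge.
  rewrite -[X in X <= _]mul1r ler_wpM2r //; last exact: UA_ge1'.
have hk0 : (k < size s)%N by [].
have hkH : (k.+1 <= H.-1)%N by rewrite -Hs.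
rewrite (take_nth x0 hk0); case E : (nth x0 s k) => [o a].
have hsz : size (take k s) = k by rewrite size_takel // ltnW.
have -> : \sum_(u <- U k.+2) l u * (W f (rcons (take k s) (o, a)) u - W g (rcons (take k s) (o, a)) u) =
  \sum_(v <- U k.+1) (\sum_(u <- U k.+2) l u * mf o a k.+1 u v) * (W f (take k s) v - W g (take k s) v) +
  \sum_(u <- U k.+2) l u * \sum_(v <- U k.+1) (mf o a k.+1 u v - mg o a k.+1 u v) * W g (take k s) v.
  rewrite big_seq_cond; under eq_bigr => u /andP[hu _] do rewrite (decomp _ _ hkH hsz hu) mulrDr.
  rewrite big_split /= -!big_seq_cond; congr (_ + _).
  under [RHS]eq_bigr => v _ do rewrite mulr_suml.
  rewrite [RHS]exchange_big /=; apply: eq_bigr => u _.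
  by rewrite mulr_sumr; apply: eq_bigr => v _; rewrite mulrA.
apply: le_trans (ler_normD _ _) _.
have -> : k.+2%:R * c = k.+1%:R * c + c by rewrite -addn1 natrD mulrDl mul1r.
apply: lerD.
  apply: IH; first exact: ltnW.
  exact: good_comb.
apply: le_trans (good_bound (Kgood_lvl hkH) Hl _) _.
apply: (@le_trans _ _ (1 / alpha * (e * UA * US))).
  apply: ler_wpM2l; first by rewrite divr_ge0 // ltW.
  apply: (@le_trans _ _ (\sum_(u <- U k.+2) e * UA)).
    rewrite big_seq_cond [X in _ <= X]big_seq_cond; apply: ler_sum => u /andP[hu _].
    exact: Dbound.
  have -> : \sum_(u <- U k.+2) e * UA = e * UA * (size (U k.+2))%:R.
    by rewrite -sum_const1 mulr_sumr; apply: eq_bigr => u _; rewrite mulr1.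
  apply: ler_wpM2l; first by rewrite mulr_ge0 // (le_trans ler01 UA_ge1').
  by rewrite /US ler_nat; apply: US_ge; lia.
by rewrite /c mul1r mulrC.
Qed.

Lemma pert s x : size s = H.-1 ->
  `|prefix_prob f (rcons s x) - prefix_prob g (rcons s x)| <= H%:R * c.
Proof.
move=> Hs; rewrite !W_last; case: x => o a /=.
have HoU : (o, [::]) \in U H by case: Hf.
have Hc1 : c <= H%:R * c.
  rewrite -[X in X <= _]mul1r ler_wpM2r // ?ler1n //.
  exact: le_trans He e_le_c.
case Es : (size s) => [|k].
  have H1 : H = 1%N by move: Hs HH; rewrite Es; lia.
  move/size0nil: Es => ->; rewrite !W_nil; apply: le_trans Hc1.
  apply: le_trans e_le_c; apply: Hq.
  by move: HoU; rewrite H1.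
have hk0 : (k < size s)%N by rewrite Es.
have hkH : (k.+1 <= H.-1)%N by rewrite -Hs Es.
have Es' : s = rcons (take k s) (nth (o, a) s k).
  by rewrite -take_nth // take_oversize // Es.
rewrite Es'; case E : (nth (o, a) s k) => [o' a'].
have hsz : size (take k s) = k by rewrite size_takel // ltnW.
have H2 : H = k.+2 by move: Hs HH; rewrite Es; lia.
have hu : (o, [::]) \in U k.+2 by move: HoU; rewrite H2.
rewrite (decomp _ _ hkH hsz hu).
apply: le_trans (ler_normD _ _) _.
have -> : H%:R * c = k.+1%:R * c + c.
  by rewrite H2 -addn1 natrD mulrDl mul1r.
apply: lerD.
  have := claim (o, a) Hs (ltnW hk0) (good_m o' a' hkH hu).
  by [].
exact: le_trans (Dbound _ _ _ hkH hu) eUA_le_c.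
Qed.

End Pert.
Section Final.
Variables (R : realFieldType) (O A : finType).

Lemma policy_bounds (pi : policy R O A) : valid_policy pi ->
  forall s, 0 <= policy_prob pi s <= 1.
Proof.
case=> P0 P1 s; apply/andP; split; first by apply: prodr_ge0 => i _; apply: P0.
apply: prodr_ile1 => i _; set t := tnth _ i; rewrite P0 /=.
rewrite -(P1 (take i s) t.1) (bigD1 t.2) //= lerDl.
by apply: sumr_ge0 => b _; apply: P0.
Qed.

Lemma skolem_m (C : O -> A -> nat -> test O A -> Prop)
    (P : O -> A -> nat -> test O A -> (test O A -> R) -> Prop) :
  (forall o a h u, C o a h u -> exists m, P o a h u m) ->
  exists mm, forall o a h u, C o a h u -> P o a h u (mm o a h u).
Proof.
move=> Hex.
have : forall x : O * A * nat * test O A, exists m : test O A -> R,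
    C x.1.1.1 x.1.1.2 x.1.2 x.2 -> P x.1.1.1 x.1.1.2 x.1.2 x.2 m.
  move=> [[[o a] h] u] /=; case: (classic (C o a h u)) => hc.
    by have [m Hm] := Hex o a h u hc; exists m.
  by exists (fun _ => 0).
case/skolem=> g Hg; exists (fun o a h u => g (o, a, h, u)) => o a h u.
exact: (Hg (o, a, h, u)).
Qed.

Lemma arith (eps alpha o a h ua us : R) (H : nat) :
  0 < eps -> 0 < alpha -> 1 <= o -> 1 <= a -> 1 <= h -> 1 <= ua -> 1 <= us ->
  h * (2 * (alpha * eps / (8 * o ^+ H.+1 * a ^+ H * h * ua ^+ 2 * us)) * ua * us / alpha)
    <= eps / (2 * (o ^+ H * a ^+ H)).
Proof.
move=> he ha ho hav hh hua hus.
have o0 : 0 < o by apply: lt_le_trans ho.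
have a0 : 0 < a by apply: lt_le_trans hav.
have h0 : 0 < h by apply: lt_le_trans hh.
have ua0 : 0 < ua by apply: lt_le_trans hua.
have us0 : 0 < us by apply: lt_le_trans hus.
have P0 : 0 < o ^+ H * a ^+ H by rewrite mulr_gt0 // exprn_gt0.
set P := o ^+ H * a ^+ H in P0 *.
have -> : h * (2 * (alpha * eps / (8 * o ^+ H.+1 * a ^+ H * h * ua ^+ 2 * us)) * ua * us / alpha)
   = eps / (4 * o * ua * P).
  rewrite /P exprS; field.
  by rewrite !expf_neq0 // !lt0r_neq0.
apply: ler_wpM2l; first exact: ltW.
have h1 : 1 <= o * ua by rewrite -[1](mulr1 1) ler_pM.
rewrite lef_pV2 ?posrE ?mulr_gt0 ?exprn_gt0 //.
have -> : 4 * o * ua * P = (o * ua) * (4 * P) by ring.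
set q := o * ua in h1 *; nra.
Qed.

End Final.
Theorem lemma15 (R : realFieldType) (O A : finType) (H : nat) (HH : (0 < H)%N)
    (U : nat -> seq (test O A)) (F : proc R O A -> Prop)
    (fstar : proc R O A) (Hfstar : F fstar)
    (alpha : R) (Halpha : 0 < alpha)
    (HF : forall f, F f -> psr_model H U alpha f)
    (eps : R) (Heps : 0 < eps) :
  forall n : nat,
    has_cover H U F
      (alpha * eps /
        (8 * #|O| ^ H.+1 * #|A| ^ H * H * UA_size H U ^ 2 * U_size H U)%:R) n ->
    has_bracket H F eps n.
Proof.
move=> n [m' [q' Hcov]].
set e' := (alpha * eps / _) in Hcov.
pose Pc f i := (forall o a h u, (1 <= h <= H.-1)%N -> u \in U h.+1 ->
    exists m, psr_m f U h (o, (a, u.1) :: u.2) m /\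
      forall v, v \in U h -> `|m v - m' i o a u h v| <= e') /\
  (forall u, u \in U 1%N -> `|test_prob f u [::] - q' i u| <= e').
have [fi Hfi] : exists fi : 'I_n -> proc R O A,
    forall i, (exists f, F f /\ Pc f i) -> F (fi i) /\ Pc (fi i) i.
  apply: (@skolem _ _ (fun i f0 => (exists f, F f /\ Pc f i) -> F f0 /\ Pc f0 i)) => i; case: (classic (exists f, F f /\ Pc f i)) => [[f Hf]|Hn].
    by exists f.
  by exists fstar.
pose N : R := #|O|%:R ^+ H * #|A|%:R ^+ H.
have N0 : 0 <= N by apply: mulr_ge0; apply: exprn_ge0; apply: ler0n.
pose del := eps / (2 * N).
have del0 : 0 <= del by apply: divr_ge0; [exact: ltW | apply: mulr_ge0].
exists (fun i pi tau => traj_prob (fi i) pi tau - del),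
       (fun i pi tau => traj_prob (fi i) pi tau + del).
split.
  move=> i pi _.
  have -> : \sum_(tau : H.-tuple (O * A))
      `|traj_prob (fi i) pi tau - del - (traj_prob (fi i) pi tau + del)| =
      \sum_(tau : H.-tuple (O * A)) (del + del).
    apply: eq_bigr => tau _.
    have -> : traj_prob (fi i) pi tau - del - (traj_prob (fi i) pi tau + del) = - (del + del).
      by ring.
    by rewrite normrN ger0_norm // addr_ge0.
  rewrite sumr_const card_tuple card_prod -mulr_natr natrX natrM exprMn -/N.
  have [->|hN] := eqVneq N 0; first by rewrite mulr0 ltW.
  have -> : (del + del) * N = eps by rewrite /del; field; rewrite hN.
  by [].
move=> f Hf; have [i [Hm Hq]] := Hcov f Hf.
have [Ffi [Hmi Hqi]] := Hfi i (ex_intro _ f (conj Hf (conj Hm Hq))).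
exists i => pi Hpi tau; rewrite -ler_distl /traj_prob -mulrBr normrM.
case/andP: (policy_bounds Hpi tau) => p0 p1; rewrite (ger0_norm p0).
apply: le_trans (ler_piMl (normr_ge0 _) p1) _.
have [mf Hmf] := skolem_m (C := fun o a h u => (1 <= h <= H.-1)%N /\ u \in U h.+1)
  (P := fun o a h u m => psr_m f U h (o, (a, u.1) :: u.2) m /\
          forall v, v \in U h -> `|m v - m' i o a u h v| <= e')
  (fun o a h u hc => Hm o a h u hc.1 hc.2).
have [mg Hmg] := skolem_m (C := fun o a h u => (1 <= h <= H.-1)%N /\ u \in U h.+1)
  (P := fun o a h u m => psr_m (fi i) U h (o, (a, u.1) :: u.2) m /\
          forall v, v \in U h -> `|m v - m' i o a u h v| <= e')
  (fun o a h u hc => Hmi o a h u hc.1 hc.2).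
have e0 : 0 <= e'.
  by rewrite /e' divr_ge0 // ?ler0n // mulr_ge0 // ltW.
have Hf' := HF f Hf; have Hfi' := HF (fi i) Ffi.
have Hgv : valid_proc (fi i) by case: Hfi'.
have Hfv' : valid_proc f by case: Hf'.
clear p0 p1; case: tau => t Ht /=.
case/lastP: t Ht => [|s x] Ht; first by move: Ht HH; rewrite /= => /eqP <-.
have Hs : size s = H.-1 by move/eqP: Ht; rewrite size_rcons => <-.
have := @pert R O A H U alpha f (fi i) mf mg (e' + e') HH Halpha Hf' Hgv
  (addr_ge0 e0 e0) (fun o a h u h1 h2 => proj1 (Hmf o a h u (conj h1 h2)))
  (fun o a h u h1 h2 => proj1 (Hmg o a h u (conj h1 h2))).
move=> Hp; apply: le_trans (Hp _ _ _ _ Hs) _.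
- move=> o a h u v h1 h2 h3.
  have := proj2 (Hmf o a h u (conj h1 h2)) v h3.
  have := proj2 (Hmg o a h u (conj h1 h2)) v h3.
  move=> g1 g2; rewrite -(subrKA (m' i o a u h v)).
  apply: le_trans (ler_normD _ _) _; apply: lerD => //.
  by rewrite distrC.
- move=> u hu; have := Hq u hu; have := Hqi u hu => g1 g2.
  rewrite -(subrKA (q' i u)); apply: le_trans (ler_normD _ _) _; apply: lerD => //.
  by rewrite distrC.
have [o0 _] := exists_o Hfv' [::].
have HoU : (o0, [::]) \in U H by case: Hf'.
case hA : #|A| => [|a'].
  rewrite /e' hA exp0n // !(muln0, mul0n) invr0 mulr0 addr0 !mul0r mulr0.
  by [].
have hO : (0 < #|O|)%N by apply/card_gt0P; exists o0.
have hUA : (1 <= UA_size H U)%N by apply: (UA_ge1 HH HoU).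
have hUS : (1 <= U_size H U)%N.
  have hH : (H.-1 < H)%N by rewrite prednK.
  apply: leq_trans (US_ge U hH); rewrite prednK //.
  by move: HoU; case: (U H).
have hA1 : 1 <= (#|A|%:R : R) by rewrite ler1n hA.
have hO1 : 1 <= (#|O|%:R : R) by rewrite ler1n.
have hH1 : 1 <= (H%:R : R) by rewrite ler1n.
have hUA1 : 1 <= ((UA_size H U)%:R : R) by rewrite ler1n.
have hUS1 : 1 <= ((U_size H U)%:R : R) by rewrite ler1n.
have key := @arith R eps alpha #|O|%:R #|A|%:R H%:R (UA_size H U)%:R (U_size H U)%:R H
  Heps Halpha hO1 hA1 hH1 hUA1 hUS1.
apply: le_trans key; rewrite le_eqVlt; apply/orP; left; apply/eqP.
have Dn : ((8 * #|O| ^ H.+1 * #|A| ^ H * H * UA_size H U ^ 2 * U_size H U)%N%:R : R) =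
   8 * #|O|%:R ^+ H.+1 * #|A|%:R ^+ H * H%:R * (UA_size H U)%:R ^+ 2 * (U_size H U)%:R.
  by rewrite !natrM !natrX.
rewrite /e' Dn; ring.
Qed.
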